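(* For a generic twisted $(N,1)$ spiral ($N\ge5$, $N\not\equiv1\pmod3$) with invariants $a_k,b_k,c_k$ from its normalized lift: (i) $c_N=\det\rho_{N+1}$ and $c_Nc_{-1}=A_0A_1$; consequently $A_0=\dfrac{a_{N-1}c_N}{A_1a_0}$ and $b_{-1}=\dfrac1{a_0}\Big(\dfrac{a_{N-1}c_N}{A_1a_0}-1\Big)$; (ii) $c_{N+1}(c_N+b_Na_{N-2})=c_N$ and $c_N+b_Na_{N-2}=\dfrac{c_N^2}{A_1A_2}$; consequently $b_N=\dfrac{c_N}{a_{N-2}}\Big(\dfrac{c_N}{A_1A_2}-1\Big)$ and $c_{N+1}=\dfrac{A_1A_2}{c_N}$; (iii) $a_{-1}=\dfrac{c_{N+1}a_{N-1}a_{N-2}}{c_Na_0}(1+a_1b_0)=\dfrac{a_{N-1}^2a_{N-2}A_1A_2}{a_0^2c_NA_0}$.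
   Context: Points lie in $\mathbb{RP}^2$; $M\in PSL(3,\mathbb R)$ is identified with a representing matrix in $SL(3,\mathbb R)$. For a bi-infinite sequence $(p_k)_{k\in\mathbb Z}$ in $\mathbb{RP}^2$, $T(p_k)=\overline{p_{k-1}p_{k+1}}\cap\overline{p_kp_{k+2}}$. A twisted $(N,1)$ pentagram spiral with monodromy $M$ is a bi-infinite sequence $(p_k)$ with $p_{N+k}=M\cdot T(p_{k-1})$ for all $k$, such that $p_{N+1}$ lies on the segment joining $p_N$ and $M\cdot p_1$; ''generic'' means all determinants and denominators appearing are nonzero. For vectors define $T(V_i)=(V_{i-1}\times V_{i+1})\times(V_i\times V_{i+2})$, $\overline T(V_i)=c_{i+1}(V_i\times V_{i+1})\times(V_{i-2}\times V_{i-1})$, $c_i=\det(V_{i+1},V_{i+2},V_{i+3})/\det(V_i,V_{i+1},V_{i+2})$. The normalized lift is the unique sequence $V_k$ with $[V_k]=p_k$, $V_{N+i}=MT(V_{i-1})$ and $V_{-i}=M^{-1}\overline T(V_{N-i+1})$ for $i\ge1$, and $\det(V_i,V_{i+1},V_{i+2})=1$ for $i=0,\dots,N$. Invariants: $V_{i+3}=a_iV_{i+2}+b_iV_{i+1}+c_iV_i$ (so $c_i=1$ for $0\le i\le N-1$); $A_i=c_i+a_ib_{i-1}$; $\rho_i=(V_i,V_{i+1},V_{i+2})$. *)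

(* Defs.v *)
From HB Require Import structures.
From mathcomp Require Import all_boot all_order all_algebra.
Set Implicit Arguments. Unset Strict Implicit. Unset Printing Implicit Defensive.
Import Order.TTheory GRing.Theory Num.Theory.
Local Open Scope ring_scope.

Definition vco (R : fieldType) (u : 'cV[R]_3) (k : nat) : R := u (inord k) 0.

Definition cross (R : fieldType) (u v : 'cV[R]_3) : 'cV[R]_3 :=
  \col_(i < 3)
    (if (i : nat) == 0%N then vco u 1 * vco v 2 - vco u 2 * vco v 1
     else if (i : nat) == 1%N then vco u 2 * vco v 0 - vco u 0 * vco v 2
     else vco u 0 * vco v 1 - vco u 1 * vco v 0).

Definition mx3 (R : fieldType) (u v w : 'cV[R]_3) : 'M[R]_3 :=
  \matrix_(i < 3, j < 3)
    (if (j : nat) == 0%N then u i 0 else if (j : nat) == 1%N then v i 0 else w i 0).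

Definition det3 (R : fieldType) (u v w : 'cV[R]_3) : R := \det (mx3 u v w).

Definition rho (R : fieldType) (V : int -> 'cV[R]_3) (i : int) : 'M[R]_3 :=
  mx3 (V i) (V (i + 1)) (V (i + 2)).

Definition cinv (R : fieldType) (V : int -> 'cV[R]_3) (i : int) : R :=
  det3 (V (i + 1)) (V (i + 2)) (V (i + 3)) / det3 (V i) (V (i + 1)) (V (i + 2)).

Definition Tv (R : fieldType) (V : int -> 'cV[R]_3) (i : int) : 'cV[R]_3 :=
  cross (cross (V (i - 1)) (V (i + 1))) (cross (V i) (V (i + 2))).

Definition Tbar (R : fieldType) (V : int -> 'cV[R]_3) (i : int) : 'cV[R]_3 :=
  cinv V (i + 1) *: cross (cross (V i) (V (i + 1))) (cross (V (i - 2)) (V (i - 1))).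

Definition Ainv (R : fieldType) (V : int -> 'cV[R]_3) (a b : int -> R) (i : int) : R :=
  cinv V i + a i * b (i - 1).

(* The points p_k = [V_k] form a twisted (N,1) pentagram spiral with monodromy M:
   V_k are nonzero (so represent points of RP^2), p_{N+k} = M . T(p_{k-1}) for all
   k (projective equality = parallel representatives), and p_{N+1} lies on the line
   through p_N and M.p_1. *)
Definition twisted_spiral (R : fieldType) (N : nat) (M : 'M[R]_3)
    (V : int -> 'cV[R]_3) : Prop :=
  [/\ forall k : int, V k != 0,
      forall k : int, Tv V (k - 1) != 0,
      forall k : int, cross (V (N%:Z + k)) (M *m Tv V (k - 1)) = 0
    & det3 (V (N%:Z + 1)) (V N%:Z) (M *m V 1) = 0].

Definition normalized_lift (R : fieldType) (N : nat) (M : 'M[R]_3)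
    (V : int -> 'cV[R]_3) : Prop :=
  [/\ forall i : int, 0 < i -> V (N%:Z + i) = M *m Tv V (i - 1),
      forall i : int, 0 < i -> V (- i) = invmx M *m Tbar V (N%:Z - i + 1)
    & forall i : nat, (i <= N)%N -> \det (rho V i%:Z) = 1].

Definition generic (R : fieldType) (V : int -> 'cV[R]_3) (a b : int -> R) : Prop :=
  [/\ forall i : int, \det (rho V i) != 0,
      forall i : int, a i != 0
    & forall i : int, Ainv V a b i != 0].

(* Main.v *)
Require Import Defs.
From HB Require Import structures.
From mathcomp Require Import all_boot all_order all_algebra.
From mathcomp Require Import ring.
Import Order.TTheory GRing.Theory Num.Theory.
Local Open Scope ring_scope.

Lemma det33f (R : comNzRingType) (A : 'M[R]_3) (f : nat -> nat -> R) :
  (forall i j : 'I_3, A i j = f i j) ->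
  \det A = f 0 0 * (f 1 1 * f 2 2 - f 1 2 * f 2 1)
         - f 0 1 * (f 1 0 * f 2 2 - f 1 2 * f 2 0)
         + f 0 2 * (f 1 0 * f 2 1 - f 1 1 * f 2 0).
Proof.
move=> hA.
rewrite (expand_det_row _ ord0) !big_ord_recl big_ord0 /cofactor.
rewrite !(expand_det_row _ ord0) !big_ord_recl !big_ord0 /cofactor.
rewrite !det_mx11 !mxE !hA /=.
rewrite /bump /=. ring.
Qed.

Section Helpers.
Variable R : fieldType.
Implicit Types (u v w p q r x y z s t : 'cV[R]_3).

Lemma vecP u v : vco u 0 = vco v 0 -> vco u 1 = vco v 1 -> vco u 2 = vco v 2 -> u = v.
Proof.
move=> h0 h1 h2; apply/matrixP => i j; rewrite (ord1 j).
have := inord_val i; case: i => [[|[|[|m]]] Hi] //= <-; [exact: h0|exact: h1|exact: h2].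
Qed.

Lemma vcoD u v k : vco (u + v) k = vco u k + vco v k. Proof. by rewrite /vco mxE. Qed.
Lemma vcoB u v k : vco (u - v) k = vco u k - vco v k. Proof. by rewrite /vco !mxE. Qed.
Lemma vcoN u k : vco (- u) k = - vco u k. Proof. by rewrite /vco mxE. Qed.
Lemma vcoZ (c : R) u k : vco (c *: u) k = c * vco u k. Proof. by rewrite /vco mxE. Qed.
Lemma vco0 k : vco (0 : 'cV[R]_3) k = 0. Proof. by rewrite /vco mxE. Qed.
Lemma vco_cross0 u v : vco (cross u v) 0 = vco u 1 * vco v 2 - vco u 2 * vco v 1.
Proof. by rewrite {1}/vco /cross mxE inordK. Qed.
Lemma vco_cross1 u v : vco (cross u v) 1 = vco u 2 * vco v 0 - vco u 0 * vco v 2.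
Proof. by rewrite {1}/vco /cross mxE inordK. Qed.
Lemma vco_cross2 u v : vco (cross u v) 2 = vco u 0 * vco v 1 - vco u 1 * vco v 0.
Proof. by rewrite {1}/vco /cross mxE inordK. Qed.

Lemma det3E u v w : det3 u v w =
  vco u 0 * (vco v 1 * vco w 2 - vco w 1 * vco v 2)
  - vco v 0 * (vco u 1 * vco w 2 - vco w 1 * vco u 2)
  + vco w 0 * (vco u 1 * vco v 2 - vco v 1 * vco u 2).
Proof.
rewrite /det3 (@det33f _ _ (fun i j => if j == 0%N then vco u i else if j == 1%N then vco v i else vco w i)).
  by rewrite /=; ring.
by move=> i j; rewrite /mx3 mxE /vco !inord_val.
Qed.

End Helpers.

Ltac vsimp := rewrite ?det3E ?(vcoD, vcoZ, vcoN, vcoB, vco0, vco_cross0, vco_cross1, vco_cross2).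
Ltac vring := apply: vecP; vsimp; ring.
Ltac nz := repeat (apply/andP; split); rewrite ?mulf_neq0 ?invr_neq0 //.
Ltac vring0 := apply: vecP; rewrite ?(vcoD, vcoZ, vcoN, vcoB, vco0); ring.
Definition cmb {R : fieldType} (x y z : R) (p q r : 'cV[R]_3) := x *: p + y *: q + z *: r.

Section Gen.
Variable R : fieldType.
Implicit Types (u v w p q r s t : 'cV[R]_3).

Lemma Tgen (al be ga : R) p q r :
  cross (cross p r) (cross q (al *: r + be *: q + ga *: p)) = det3 p q r *: (al *: r + ga *: p).
Proof. vring. Qed.

Lemma Tbargen (al be ga : R) x y w :
  cross (cross x (al *: x + be *: y + ga *: w)) (cross w y)
  = det3 w y x *: ((al *: x + be *: y + ga *: w) - al *: x).
Proof. vring. Qed.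

Lemma detC (x1 x2 x3 y1 y2 y3 z1 z2 z3 : R) p q r :
  det3 (cmb x1 x2 x3 p q r) (cmb y1 y2 y3 p q r) (cmb z1 z2 z3 p q r) =
  (x1 * (y2 * z3 - y3 * z2) - x2 * (y1 * z3 - y3 * z1) + x3 * (y1 * z2 - y2 * z1)) * det3 p q r.
Proof. rewrite /cmb; vsimp; ring. Qed.

Lemma detcmb1 (x y z : R) p q r : det3 (cmb x y z p q r) q r = x * det3 p q r.
Proof. rewrite /cmb; vsimp; ring. Qed.
Lemma detcmb2 (x y z : R) p q r : det3 p (cmb x y z p q r) r = y * det3 p q r.
Proof. rewrite /cmb; vsimp; ring. Qed.
Lemma detcmb3 (x y z : R) p q r : det3 p q (cmb x y z p q r) = z * det3 p q r.
Proof. rewrite /cmb; vsimp; ring. Qed.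

Lemma det3lin1 (x y z : R) u v w s t :
  det3 (x *: u + y *: v + z *: w) s t = x * det3 u s t + y * det3 v s t + z * det3 w s t.
Proof. vsimp; ring. Qed.
Lemma det3Z3 (k : R) u v w : det3 u v (k *: w) = k * det3 u v w.
Proof. vsimp; ring. Qed.
Lemma det3uu u t : det3 u u t = 0.
Proof. vsimp; ring. Qed.
Lemma det3kill (k l : R) u v : det3 u v (k *: (v - l *: u)) = 0.
Proof. vsimp; ring. Qed.
Lemma det3lin3 (x y z : R) u v w s t :
  det3 s t (x *: u + y *: v + z *: w) = x * det3 s t u + y * det3 s t v + z * det3 s t w.
Proof. vsimp; ring. Qed.
Lemma det3vv s t : det3 s t t = 0.
Proof. vsimp; ring. Qed.
Lemma det3vu s t : det3 s t s = 0.
Proof. vsimp; ring. Qed.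
Lemma det3swap23 u v w : det3 u w v = - det3 u v w.
Proof. vsimp; ring. Qed.

Lemma det3M (M : 'M[R]_3) u v w : det3 (M *m u) (M *m v) (M *m w) = \det M * det3 u v w.
Proof.
rewrite /det3 -det_mulmx; congr (\det _); apply/matrixP => i j.
rewrite !mxE; case: ifP => h1; [|case: ifP => h2];
  apply: eq_bigr => k _; rewrite !mxE ?h1 ?h2 //.
Qed.

Lemma mulmx_cmb (M : 'M[R]_3) (x y z : R) p q r :
  M *m cmb x y z p q r = cmb x y z (M *m p) (M *m q) (M *m r).
Proof. by rewrite /cmb !mulmxDr !scalemxAr. Qed.

Lemma cmb_eq (x y z x' y' z' : R) p q r : det3 p q r != 0 ->
  cmb x y z p q r = cmb x' y' z' p q r -> [/\ x = x', y = y' & z = z'].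
Proof.
move=> hD E; split.
- by apply: (mulIf hD); rewrite -(detcmb1 x y z) -(detcmb1 x' y' z') E.
- by apply: (mulIf hD); rewrite -(detcmb2 x y z) -(detcmb2 x' y' z') E.
- by apply: (mulIf hD); rewrite -(detcmb3 x y) -(detcmb3 x' y') E.
Qed.

Lemma parallel_cmb (k be : R) x p q r : det3 p q r != 0 -> k != 0 ->
  cross x (k *: cmb be 0 1 p q r) = 0 ->
  x = cmb (det3 p q x / det3 p q r * be) 0 (det3 p q x / det3 p q r) p q r.
Proof.
move=> hD hk hc.
have hc' : cross x (cmb be 0 1 p q r) = 0.
  have: k *: cross x (cmb be 0 1 p q r) = 0 by rewrite -hc /cmb; vring.
  by move/eqP; rewrite scaler_eq0 (negbTE hk) /= => /eqP.
have h1 : det3 p x r = 0.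
  have: vco (cross x (cmb be 0 1 p q r)) 0 * vco p 0 + vco (cross x (cmb be 0 1 p q r)) 1 * vco p 1
     + vco (cross x (cmb be 0 1 p q r)) 2 * vco p 2 = 0 by rewrite hc' !vco0; ring.
  rewrite /cmb; vsimp => h; rewrite -[RHS]h; ring.
have h2 : det3 x q r = be * det3 p q x.
  have: vco (cross x (cmb be 0 1 p q r)) 0 * vco q 0 + vco (cross x (cmb be 0 1 p q r)) 1 * vco q 1
     + vco (cross x (cmb be 0 1 p q r)) 2 * vco q 2 = 0 by rewrite hc' !vco0; ring.
  rewrite /cmb; vsimp => h; apply/eqP; rewrite -subr_eq0 -oppr_eq0; apply/eqP; rewrite -[RHS]h; ring.
have C : det3 p q r *: x = det3 x q r *: p + det3 p x r *: q + det3 p q x *: r by vring.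
apply: (scalerI hD); rewrite C h1 h2 /cmb; move: (det3 p q x) (det3 p q r) hD => a D hD; apply: vecP; vsimp; by field.
Qed.

End Gen.
Arguments cmb_eq {R x y z x' y' z' p q r}.

Section VLemmas.
Variable R : fieldType.
Variable V : int -> 'cV[R]_3.
Variables a b : int -> R.
Hypothesis Rec : forall i : int, V (i + 3) = a i *: V (i + 2) + b i *: V (i + 1) + cinv V i *: V i.

Lemma detrhoE i : \det (rho V i) = det3 (V i) (V (i + 1)) (V (i + 2)).
Proof. by []. Qed.

Lemma cinvE i : cinv V i = \det (rho V (i + 1)) / \det (rho V i).
Proof.
rewrite /cinv !detrhoE -!addrA.
have -> : (1 + 1 : int) = 2 by [].
by have -> : (1 + 2 : int) = 3 by [].
Qed.

Lemma TvE i : Tv V i = \det (rho V (i - 1)) *: (a (i - 1) *: V (i + 1) + cinv V (i - 1) *: V (i - 1)).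
Proof.
have e3 : i - 1 + 3 = i + 2 by ring.
have e2 : i - 1 + 2 = i + 1 by ring.
rewrite /Tv detrhoE; have := Rec (i - 1); rewrite e3 e2 subrK => ->.
exact: Tgen.
Qed.

Lemma TbarE i : Tbar V i = (cinv V (i + 1) * \det (rho V (i - 2))) *: (V (i + 1) - a (i - 2) *: V i).
Proof.
have e3 : i - 2 + 3 = i + 1 by ring.
have e2 : i - 2 + 2 = i by ring.
have e1 : i - 2 + 1 = i - 1 by ring.
rewrite /Tbar detrhoE e2 e1; have := Rec (i - 2); rewrite e3 e2 e1 => ->.
by rewrite -scalerA Tbargen.
Qed.
End VLemmas.

Theorem mainTheorem10 (R : realFieldType) (N : nat) (M : 'M[R]_3)
    (V : int -> 'cV[R]_3) (a b : int -> R) :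
  (5 <= N)%N -> (N %% 3 != 1)%N ->
  \det M = 1 ->
  twisted_spiral N M V ->
  normalized_lift N M V ->
  (forall i : int, V (i + 3) = a i *: V (i + 2) + b i *: V (i + 1) + cinv V i *: V i) ->
  generic V a b ->
  let c := cinv V in
  let A := Ainv V a b in
  let n := N%:Z in
  (* (i) *)
  [/\ c n = \det (rho V (n + 1)),
      c n * c (-1) = A 0 * A 1,
      A 0 = a (n - 1) * c n / (A 1 * a 0)
    & b (-1) = (a (n - 1) * c n / (A 1 * a 0) - 1) / a 0] /\
  (* (ii) *)
  [/\ c (n + 1) * (c n + b n * a (n - 2)) = c n,
      c n + b n * a (n - 2) = c n ^+ 2 / (A 1 * A 2),
      b n = c n / a (n - 2) * (c n / (A 1 * A 2) - 1)
    & c (n + 1) = A 1 * A 2 / c n] /\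
  (* (iii) *)
  (a (-1) = c (n + 1) * a (n - 1) * a (n - 2) / (c n * a 0) * (1 + a 1 * b 0) /\
   a (-1) = a (n - 1) ^+ 2 * a (n - 2) * A 1 * A 2 / (a 0 ^+ 2 * c n * A 0)).
Proof.
move=> hN5 _ hM [_ _ sp_par _] [L1 L2 L3] Rec [G1 G2 G3] c A n.
subst c A.
have hMu : M \in unitmx by rewrite unitmxE hM unitr1.
have DN : forall k : nat, (k <= N)%N -> \det (rho V (n - k%:Z)) = 1.
  by move=> k hk; rewrite /n subzn //; apply: L3; rewrite leq_subr.
have D0 : \det (rho V 0) = 1 by apply: (L3 0%N).
have D1 : \det (rho V 1) = 1 by apply: (L3 1%N); apply: leq_trans hN5.
have D2 : \det (rho V 2) = 1 by apply: (L3 2%N); apply: leq_trans hN5.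
have D3 : \det (rho V 3) = 1 by apply: (L3 3%N); apply: leq_trans hN5.
have Dn : \det (rho V n) = 1 by apply: (L3 N).
have Dn1 : \det (rho V (n - 1)) = 1 by apply: (DN 1%N); apply: leq_trans hN5.
have Dn2 : \det (rho V (n - 2)) = 1 by apply: (DN 2%N); apply: leq_trans hN5.
have Dn3 : \det (rho V (n - 3)) = 1 by apply: (DN 3%N); apply: leq_trans hN5.
have c0 : cinv V 0 = 1 by rewrite cinvE add0r D1 D0 divr1.
have c1 : cinv V 1 = 1 by rewrite cinvE D2 D1 divr1.
have c2 : cinv V 2 = 1 by rewrite cinvE D3 D2 divr1.
have cn1 : cinv V (n - 1) = 1 by rewrite cinvE subrK Dn Dn1 divr1.
set d := \det (rho V (-1)).
have hd : d != 0 by apply: G1.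
have dE : d = det3 (V (-1)) (V 0) (V 1) by [].
have cm1 : cinv V (-1) = d^-1 by rewrite cinvE D0 mul1r.
have V2E : V 2 = cmb (cinv V (-1)) (b (-1)) (a (-1)) (V (-1)) (V 0) (V 1).
  by have := Rec (-1); rewrite /= => ->; rewrite /cmb; vring.
have V3E : V 3 = cmb (a 0 * cinv V (-1)) (a 0 * b (-1) + 1) (a 0 * a (-1) + b 0) (V (-1)) (V 0) (V 1).
  by have := Rec 0; rewrite !add0r c0 V2E => ->; rewrite /cmb; vring.
have V4E : V 4 = cmb (a 1 * (a 0 * cinv V (-1)) + b 1 * cinv V (-1))
   (a 1 * (a 0 * b (-1) + 1) + b 1 * b (-1)) (a 1 * (a 0 * a (-1) + b 0) + b 1 * a (-1) + 1) (V (-1)) (V 0) (V 1).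
  by have := Rec 1; rewrite /= c1 V3E V2E => ->; rewrite /cmb; vring.
set f1 := M *m V (-1); set f2 := M *m V 0; set f3 := M *m V 1.
have X1E : V (n + 1) = cmb (d * cinv V (-1)) 0 (d * a (-1)) f1 f2 f3.
  have := L1 1 erefl; rewrite (@TvE _ V a b Rec) (_ : (1 - 1 - 1 : int) = -1) //.
  rewrite (_ : (1 - 1 + 1 : int) = 1) // => ->.
  rewrite -mulmx_cmb; congr (M *m _); rewrite /cmb; rewrite -/d; vring.
have X2E : V (n + 2) = cmb (a 0 * cinv V (-1)) (a 0 * b (-1) + 1) (a 0 * a (-1)) f1 f2 f3.
  have := L1 2 erefl; rewrite (@TvE _ V a b Rec) (_ : (2 - 1 - 1 : int) = 0) //.
  rewrite (_ : (2 - 1 + 1 : int) = 2) // D0 c0 V2E => ->.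
  rewrite -mulmx_cmb; congr (M *m _); rewrite /cmb; vring.
have X3E : V (n + 3) = cmb (a 1 * (a 0 * cinv V (-1))) (a 1 * (a 0 * b (-1) + 1))
    (a 1 * (a 0 * a (-1) + b 0) + 1) f1 f2 f3.
  have := L1 3 erefl; rewrite (@TvE _ V a b Rec) (_ : (3 - 1 - 1 : int) = 1) //.
  rewrite (_ : (3 - 1 + 1 : int) = 3) // D1 c1 V3E => ->.
  rewrite -mulmx_cmb; congr (M *m _); rewrite /cmb; vring.
have X4E : V (n + 4) = cmb (a 2 * (a 1 * (a 0 * cinv V (-1)) + b 1 * cinv V (-1)) + cinv V (-1))
   (a 2 * (a 1 * (a 0 * b (-1) + 1) + b 1 * b (-1)) + b (-1))
   (a 2 * (a 1 * (a 0 * a (-1) + b 0) + b 1 * a (-1) + 1) + a (-1)) f1 f2 f3.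
  have := L1 4 erefl; rewrite (@TvE _ V a b Rec) (_ : (4 - 1 - 1 : int) = 2) //.
  rewrite (_ : (4 - 1 + 1 : int) = 4) // D2 c2 V4E V2E => ->.
  rewrite -mulmx_cmb; congr (M *m _); rewrite /cmb; vring.
have Rm2 : V 1 = a (-2) *: V 0 + b (-2) *: V (-1) + cinv V (-2) *: V (-2).
  by have := Rec (-2); rewrite (_ : (-2 + 3 : int) = 1) // (_ : (-2 + 2 : int) = 0) //
     (_ : (-2 + 1 : int) = -1).
have hf : det3 f1 f2 f3 = d by rewrite det3M hM mul1r dE.
have hDm2 : \det (rho V (-2)) != 0 by apply: G1.
set L := det3 f1 f2 (V n) / det3 f1 f2 f3.
have X0E : V n = cmb (L * - b (-2)) 0 L f1 f2 f3.
  rewrite /L; apply: (@parallel_cmb _ (\det (rho V (-2)))); [by rewrite hf | exact: hDm2 |].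
  have := sp_par 0; rewrite (@TvE _ V a b Rec) (_ : (0 - 1 - 1 : int) = -2) //.
  rewrite (_ : (0 - 1 + 1 : int) = 0) // addr0 => <-; congr (cross _ _).
  rewrite -mulmx_cmb -scalemxAr; congr (_ *: (M *m _)).
  rewrite /cmb Rm2; vring.
have F1 : f1 = (cinv V (n + 1) * 1) *: (V (n + 1) - a (n - 2) *: V n).
  have := L2 1 erefl; rewrite subrK (@TbarE _ V a b Rec) -/n Dn2 => E.
  by rewrite /f1 {1}E mulKVmx.
have F1' : cmb 1 0 0 f1 f2 f3 = cmb (cinv V (n + 1) * (d * cinv V (-1) - a (n - 2) * (L * - b (-2)))) 0
     (cinv V (n + 1) * (d * a (-1) - a (n - 2) * L)) f1 f2 f3.
  transitivity f1; first by rewrite /cmb; vring.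
  rewrite {1}F1 X1E X0E /cmb; vring0.
have hf0 : det3 f1 f2 f3 != 0 by rewrite hf.
have [lift1 _ lift2] := cmb_eq hf0 F1'.
set g := M *m V (-2).
have gE : g = (cinv V n * 1) *: (V n - a (n - 3) *: V (n - 1)).
  have := L2 2 erefl; rewrite (_ : (N%:Z - 2 + 1) = n - 1); last by rewrite /n; ring.
  rewrite (@TbarE _ V a b Rec) subrK (_ : n - 1 - 2 = n - 3); last by ring.
  by rewrite Dn3 => E; rewrite /g {1}E mulKVmx.
have hg0 : det3 (V (n - 1)) (V n) g = 0 by rewrite gE det3kill.
have Rn1 : V (n + 2) = a (n - 1) *: V (n + 1) + b (n - 1) *: V n + 1 *: V (n - 1).
  have := Rec (n - 1); rewrite (_ : n - 1 + 3 = n + 2); last by ring.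
  by rewrite (_ : n - 1 + 2 = n + 1) ?subrK ?cn1 //; ring.
have gE' : cinv V (-2) *: g = cmb (- b (-2)) (- a (-2)) 1 f1 f2 f3.
  rewrite /g scalemxAr -mulmx_cmb; congr (M *m _); rewrite /cmb Rm2; vring0.
have hA : det3 (V (n + 2)) (V n) (cinv V (-2) *: g) = a (n - 1) * det3 (V (n + 1)) (V n) (cinv V (-2) *: g).
  by rewrite !det3Z3 {1}Rn1 det3lin1 det3uu hg0; ring.
rewrite gE' X2E X1E X0E !detC hf in hA.
have Rn : V (n + 3) = a n *: V (n + 2) + b n *: V (n + 1) + cinv V n *: V n.
  by have := Rec n.
have hB : det3 (V n) (V (n + 2)) (V (n + 3)) = b n * det3 (V n) (V (n + 2)) (V (n + 1)).
  by rewrite {1}Rn det3lin3 det3vv det3vu; ring.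
rewrite X0E X1E X2E X3E !detC hf in hB.
have hDn : det3 (V n) (V (n + 1)) (V (n + 2)) = 1 by rewrite -Dn.
rewrite X0E X1E X2E !detC hf in hDn.
have hDn1 : \det (rho V (n + 1)) = cinv V n by rewrite cinvE Dn divr1.
have hcN0 : cinv V n != 0 by rewrite -hDn1; apply: G1.
have hcN : cinv V n = det3 (V (n + 1)) (V (n + 2)) (V (n + 3)).
  rewrite -hDn1 detrhoE -!addrA.
  by rewrite (_ : (1 + 1 : int) = 2) // (_ : (1 + 2 : int) = 3).
have hcN1 : cinv V (n + 1) * cinv V n = det3 (V (n + 2)) (V (n + 3)) (V (n + 4)).
  rewrite cinvE hDn1 mulfVK // detrhoE -!addrA.
  by rewrite (_ : (1 + 1 : int) = 2) // (_ : (1 + 2 : int) = 3) // (_ : (1 + 3 : int) = 4).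
rewrite X1E X2E X3E !detC hf in hcN.
rewrite X2E X3E X4E !detC hf in hcN1.
clearbody L d.
have A0E : Ainv V a b 0 = 1 + a 0 * b (-1) by rewrite /Ainv c0.
have A1E : Ainv V a b 1 = 1 + a 1 * b 0 by rewrite /Ainv c1.
have A2E : Ainv V a b 2 = 1 + a 2 * b 1 by rewrite /Ainv c2.
have hA0 : 1 + a 0 * b (-1) != 0 by rewrite -A0E; apply: G3.
have hA1 : 1 + a 1 * b 0 != 0 by rewrite -A1E; apply: G3.
have ha0 : a 0 != 0 by apply: G2.
have haN2 : a (n - 2) != 0 by apply: G2.
have ham2 : a (-2) != 0 by apply: G2.
have hcN1' : cinv V (n + 1) != 0.
  by apply/eqP => h; move: lift1; rewrite h mul0r; apply/eqP; rewrite oner_eq0.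
rewrite cm1 in lift1 lift2 hA hB hDn hcN hcN1.
have e_am1 : a (-1) = a (n - 2) * L / d.
  move/esym/eqP: lift2; rewrite mulf_eq0 (negbTE hcN1') /= subr_eq0 => /eqP <-; by field.
rewrite e_am1 in lift1 hA hB hDn hcN hcN1.
have e_Q : L * (1 + a 0 * b (-1)) * d * (1 + b (-2) * a (n - 2) * L) = 1.
  by rewrite -[RHS]hDn; field.
have hL : L != 0 by apply/eqP => h; move: e_Q; rewrite h !mul0r; apply/eqP; rewrite eq_sym oner_eq0.
have hQ : 1 + b (-2) * a (n - 2) * L != 0.
  by apply/eqP => h; move: e_Q; rewrite h !mulr0; apply/eqP; rewrite eq_sym oner_eq0.
have e_cN : cinv V n = (1 + a 0 * b (-1)) * (1 + a 1 * b 0) * d by rewrite hcN; field.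
have e_cN1 : cinv V (n + 1) = L * (1 + a 0 * b (-1)) * d.
  apply: (mulIf hQ); by rewrite e_Q; rewrite [RHS]lift1; field; nz.
have e_A2 : (1 + a 2 * b 1) = cinv V (n + 1) * cinv V n / (1 + a 1 * b 0).
  by rewrite hcN1; field; nz.
have e_aN1 : a (n - 1) = a 0 / d.
  move: hA; set Q' := (X in _ = a (n - 1) * X) => hA.
  have eQ : Q' = L * a (-2) * (1 + b (-2) * a (n - 2) * L) * d by rewrite /Q'; field.
  have hQ' : Q' != 0 by rewrite eQ !mulf_neq0.
  by apply: (mulIf hQ'); rewrite -hA eQ; field; nz.
have e_bN : b n = L * b (-2) * cinv V n.
  move: hB; set Q2 := (X in _ = b n * X) => hB.
  have eQ2 : Q2 = - (L * (1 + a 0 * b (-1)) * d * (1 + b (-2) * a (n - 2) * L)) by rewrite /Q2; field.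
  rewrite e_Q in eQ2.
  have -> : b n = - (b n * Q2) by rewrite eQ2; ring.
  by rewrite -hB e_cN; field; nz.
have hk : L * (1 + a 0 * b (-1)) * d != 0 by rewrite !mulf_neq0.
have h1 : 1 + b (-2) * a (n - 2) * L = (L * (1 + a 0 * b (-1)) * d)^-1.
  by apply: (mulfI hk); rewrite e_Q mulfV.
have hLa : a (n - 2) * L != 0 by rewrite mulf_neq0.
have e_bm2 : b (-2) = ((L * (1 + a 0 * b (-1)) * d)^-1 - 1) / (a (n - 2) * L).
  by rewrite -h1; field; nz.
have hcNd : cinv V n = \det (rho V (n + 1)) by rewrite hDn1.
rewrite A0E A1E A2E e_A2 cm1 e_aN1 e_bN e_am1 e_cN1 e_cN e_bm2.
repeat split; try by field; nz.
by rewrite -e_cN hcNd.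
Qed.
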